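(* Let $n\ge1$ and let $\Delta\subseteq B_n$ be any simplicial complex (a family of subsets of $[1,n]$ closed under taking subsets). Then there is a subcomplex $\Delta'\subseteq\Delta$ such that $f_i(\Delta')=f_i(\Delta)-f_{n-i}(\Delta)$ for $0\le i\le\lfloor\frac n2\rfloor$ and $f_i(\Delta')=0$ for $i>\lfloor\frac n2\rfloor$.
   Context: $B_n$ is the Boolean lattice of subsets of $[1,n]=\{1,\dots,n\}$. For a family $\Delta$ of subsets, $f_i(\Delta)$ is the number of sets of cardinality $i$ in $\Delta$. A subcomplex of $\Delta$ is a subfamily that is itself closed under taking subsets (possibly empty). *)

(* Defs.v *)
From mathcomp Require Import all_boot all_order all_algebra.
Set Implicit Arguments. Unset Strict Implicit. Unset Printing Implicit Defensive.

(* The Boolean lattice B_n: subsets of [1,n], modelled as {set 'I_n}.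
   A family of subsets is a {set {set 'I_n}}. *)

Definition is_complex (n : nat) (D : {set {set 'I_n}}) : Prop :=
  forall A B : {set 'I_n}, A \in D -> B \subset A -> B \in D.

Definition fvec (n : nat) (D : {set {set 'I_n}}) (i : nat) : nat :=
  #|[set A in D | #|A| == i]|.

(* Main.v *)
Require Import Defs.
From mathcomp Require Import all_boot all_order all_algebra all_fingroup.
From mathcomp Require Import zify.
Import GRing.Theory Num.Theory.

Section S.
Variable T : finType.

Lemma exists_perm_map (A B : {set T}) :
  #|A| = #|B| -> exists s : {perm T}, [set s x | x in A] = B.
Proof.
move: {2}#|A :\: B| (leqnn #|A :\: B|) => k.
elim: k A => [|k IH] A Hk HAB.
  have sAB : A \subset B.
    by rewrite -setD_eq0 -cards_eq0 -leqn0.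
  exists 1%g; rewrite imset_perm1.
  by apply/eqP; rewrite eqEcard sAB HAB leqnn.
have [sAB|/subsetPn [x xA xnB]] := boolP (A \subset B).
  exists 1%g; rewrite imset_perm1.
  by apply/eqP; rewrite eqEcard sAB HAB leqnn.
have [sBA|/subsetPn [y yB ynA]] := boolP (B \subset A).
  exfalso; move: sBA; rewrite subEproper => /orP [/eqP EBA|pBA].
    by move: xnB; rewrite EBA xA.
  by move: (proper_card pBA); rewrite HAB ltnn.
set A' := [set tperm x y z | z in A].
have cA' : #|A'| = #|B| by rewrite card_imset //; apply: perm_inj.
have sub : A' :\: B \subset (A :\: B) :\ x.
  apply/subsetP => z; rewrite !inE => /andP [znB /imsetP [w wA Ez]]; subst z.
  case: (tpermP x y w) znB => [Ew|Ew|nx ny] znB.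
  - by move: znB; rewrite yB.
  - by move: ynA; rewrite -Ew wA.
  - rewrite znB wA /= andbT; apply/eqP; exact: nx.
have : #|A' :\: B| <= k.
  have H := subset_leq_card sub.
  move: Hk; rewrite (cardsD1 x (A :\: B)) !inE xA xnB /= add1n ltnS => Hk.
  exact: leq_trans H Hk.
move=> /IH /(_ cA') [s Hs].
exists (tperm x y * s)%g.
rewrite -Hs /A' -imset_comp; apply: eq_imset => z /=.
by rewrite permM.
Qed.

End S.

Section Main.
Variable n : nat.
Local Notation T := 'I_n.

Definition is_up (E : {set {set T}}) : Prop :=
  forall A B : {set T}, A \in E -> A \subset B -> B \in E.

Lemma fvec_split (D E : {set {set T}}) j :
  fvec D j = fvec (D :\: E) j + fvec (D :&: E) j.
Proof.
rewrite /fvec -(cardsID E [set A in D | #|A| == j]) addnC; congr (_ + _);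
  apply: eq_card => A; rewrite !inE; by case: (A \in D); case: (A \in E); case: (#|A| == j).
Qed.

Lemma fvec_gt0 (E : {set {set T}}) j :
  0 < fvec E j -> exists2 A, A \in E & #|A| = j.
Proof.
rewrite /fvec card_gt0 => /set0Pn [A]; rewrite inE => /andP [AE /eqP HA].
by exists A.
Qed.

Lemma fvec_ge1 (E : {set {set T}}) j A :
  A \in E -> #|A| = j -> 0 < fvec E j.
Proof.
move=> AE HA; rewrite /fvec card_gt0; apply/set0Pn; exists A.
by rewrite inE AE HA eqxx.
Qed.

Lemma fvec_perm (s : {perm T}) (E : {set {set T}}) j :
  fvec [set [set s x | x in X] | X : {set T} in E] j = fvec E j.
Proof.
rewrite /fvec.
have -> : [set A in [set [set s x | x in X] | X : {set T} in E] | #|A| == j] =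
          [set [set s x | x in X] | X : {set T} in [set A in E | #|A| == j]].
  apply/setP => A; rewrite inE; apply/andP/imsetP.
  - case=> /imsetP [X XE ->]; rewrite card_imset; last exact: perm_inj.
    by move=> HX; exists X => //; rewrite inE XE.
  - case=> X; rewrite inE => /andP [XE HX] ->; split; first by apply: imset_f.
    by rewrite card_imset //; exact: perm_inj.
by rewrite card_imset //; apply: imset_inj; exact: perm_inj.
Qed.

Lemma perm_up (s : {perm T}) (E : {set {set T}}) :
  is_up E -> is_up [set [set s x | x in X] | X : {set T} in E].
Proof.
move=> upE A B /imsetP [X XE ->] sub.
apply/imsetP; exists [set s^-1%g x | x in B].
  apply: (upE X) => //; apply/subsetP => z zX; apply/imsetP; exists (s z).
    by move/subsetP: sub; apply; apply: imset_f.
  by rewrite permK.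
rewrite -imset_comp; apply/setP => z; rewrite (eq_imset _ (fun w => permKV s w)).
by rewrite imset_id.
Qed.

Lemma stepA k (IH : forall E D : {set {set T}}, #|E| <= k -> is_complex D -> is_up E ->
   exists G, [/\ is_complex G, G \subset D & forall j, fvec G j = fvec D j - fvec E j])
  (E D : {set {set T}}) : #|E| <= k.+1 -> is_complex D -> is_up E ->
  D :&: E != set0 ->
   exists G, [/\ is_complex G, G \subset D & forall j, fvec G j = fvec D j - fvec E j].
Proof.
move=> cE cD uE /set0Pn [X XDE].
have cE' : #|E :\: D| <= k.
  have h1 : 0 < #|E :&: D|.
    by rewrite card_gt0; apply/set0Pn; exists X; rewrite setIC.
  have h2 : #|E :&: D| <= #|E| by rewrite subset_leq_card ?subsetIl.
  rewrite cardsD; lia.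
have cD' : is_complex (D :\: E).
  move=> A B; rewrite !inE => /andP [AnE AD] BA; rewrite (cD A B) // andbT.
  by apply: contra AnE => BE; apply: (uE B).
have uE' : is_up (E :\: D).
  move=> A B; rewrite !inE => /andP [AnD AE] AB; rewrite (uE A B) // andbT.
  by apply: contra AnD => BD; apply: (cD B).
have [G [cG sG HG]] := IH _ _ cE' cD' uE'.
exists G; split => //.
  by apply: subset_trans sG _; apply: subsetDl.
move=> j; rewrite HG (fvec_split D E j) (fvec_split E D j) setIC.
by rewrite subnDr.
Qed.

Lemma main_lemma k : forall E D : {set {set T}}, #|E| <= k -> is_complex D -> is_up E ->
   exists G, [/\ is_complex G, G \subset D & forall j, fvec G j = fvec D j - fvec E j].
Proof.
elim: k => [|k IH] E D cE cD uE.
  exists D; split => // j.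
  move: cE; rewrite leqn0 cards_eq0 => /eqP ->.
  rewrite /fvec (_ : [set A in set0 | _] = set0) ?cards0 ?subn0 //.
  by apply/setP => A; rewrite !inE.
have [ne|] := boolP (D :&: E != set0); first exact: (@stepA k IH E D cE cD uE ne).
rewrite negbK => /eqP DE0.
have [/existsP [A /existsP [B /and3P [AE BD /eqP cAB]]]|none] :=
  boolP [exists A : {set T}, exists B : {set T}, [&& A \in E, B \in D & #|A| == #|B|]].
  have [s Hs] := @exists_perm_map _ A B cAB.
  set E2 := [set [set s x | x in X] | X : {set T} in E].
  have cE2 : #|E2| <= k.+1.
    by rewrite card_imset //; apply: imset_inj; exact: perm_inj.
  have ne : D :&: E2 != set0.
    by apply/set0Pn; exists B; rewrite inE BD -Hs; apply: imset_f.
  have [G [cG sG HG]] := @stepA k IH E2 D cE2 cD (@perm_up s E uE) ne.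
  by exists G; split => // j; rewrite HG fvec_perm.
exists D; split => // j.
case: (posnP (fvec E j)) => [->|/fvec_gt0 [A AE HA]]; first by rewrite subn0.
case: (posnP (fvec D j)) => [->//|/fvec_gt0 [B BD HB]].
case/negP: none; apply/existsP; exists A; apply/existsP; exists B.
by rewrite AE BD HA HB eqxx.
Qed.


Lemma sub_of_card (B : {set T}) j : j <= #|B| -> exists2 C : {set T}, C \subset B & #|C| = j.
Proof.
elim: j => [|j IHj] H.
  by exists set0; rewrite ?sub0set ?cards0.
have [C CB HC] := IHj (ltnW H).
have : C \proper B by rewrite properEcard CB HC H.
case/properP => _ [x xB xnC].
exists (x |: C); first by rewrite subUset sub1set xB CB.
by rewrite cardsU1 xnC HC.
Qed.

Lemma fvec_big (X : {set {set T}}) i : n < i -> fvec X i = 0.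
Proof.
move=> Hi; apply/eqP; rewrite cards_eq0; apply/eqP/setP => A; rewrite !inE.
apply/negbTE; rewrite negb_and; apply/orP; right.
have : #|A| <= n by rewrite -[X in _ <= X](card_ord n); apply: max_card.
by move=> h; apply/eqP => e; move: h; rewrite e leqNgt Hi.
Qed.

Lemma fvec_compl (D : {set {set T}}) j : j <= n ->
  fvec [set X | ~: X \in D] j = fvec D (n - j).
Proof.
move=> jn; rewrite /fvec.
have -> : [set A in [set X | ~: X \in D] | #|A| == j] =
          [set ~: X | X in [set A in D | #|A| == n - j]].
  apply/setP => A; rewrite !inE; apply/andP/imsetP.
  - case=> AD /eqP HA; exists (~: A); last by rewrite setCK.
    by rewrite inE AD cardsCs setCK card_ord HA eqxx.
  - case=> X; rewrite inE => /andP [XD /eqP HX] ->; rewrite setCK XD.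
    by split => //; rewrite cardsCs setCK card_ord HX subKn.
by rewrite card_imset //; apply: setC_inj.
Qed.

End Main.

Theorem theorem11 (n : nat) (D : {set {set 'I_n}}) :
  (1 <= n)%N -> is_complex D ->
  exists D' : {set {set 'I_n}},
    [/\ is_complex D', D' \subset D,
        (forall i : nat, (i <= n./2)%N ->
           ((fvec D' i)%:Z = (fvec D i)%:Z - (fvec D (n - i))%:Z)%R)
      & (forall i : nat, (n./2 < i)%N -> fvec D' i = 0%N)].
Proof.
move=> _ cD.
set E := [set X | ~: X \in D].
have uE : @is_up n E.
  move=> A B; rewrite !inE => AE AB; apply: (cD (~: A)) => //.
  by rewrite setCS.
have [G [cG sG HG]] := @main_lemma n #|E| E D (leqnn #|E|) cD uE.
have fG : forall j, j <= n -> fvec G j = fvec D j - fvec D (n - j).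
  by move=> j jn; rewrite HG fvec_compl.
have ineq : forall j, j <= n - j -> fvec D (n - j) <= fvec D j.
  move=> j jnj; have jn : j <= n by apply: leq_trans jnj (leq_subr _ _).
  rewrite leqNgt; apply/negP => lt.
  have : 0 < fvec G (n - j).
    by rewrite fG ?leq_subr // subKn // subn_gt0.
  case/fvec_gt0 => B BG HB.
  have jB : j <= #|B| by rewrite HB.
  have [C CB HC] := @sub_of_card n B j jB.
  have : 0 < fvec G j by apply: (@fvec_ge1 n G j C (cG B C BG CB) HC).
  by rewrite fG // subn_gt0 ltnNge (ltnW lt).
have half : forall i, i <= n./2 -> i <= n - i.
  move=> i; have := odd_double_half n; rewrite -addnn; lia.
exists G; split => //.
  move=> i hi; have hin := half i hi.
  have iin : i <= n by apply: leq_trans hin (leq_subr _ _).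
  by rewrite fG // subzn // ineq.
move=> i hi; have [iin|nli] := leqP i n; last by rewrite fvec_big.
rewrite fG //; apply/eqP; rewrite subn_eq0.
have := ineq (n - i); rewrite subKn //; apply.
have := odd_double_half n; rewrite -addnn; lia.
Qed.
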